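(* Assume the standing hypotheses below. Let $T=R[\lambda]$ with a new indeterminate $\lambda$, and set $F_1=f(\lambda^4w,\lambda^3x,\lambda y,z)=\sum_i f^{(i,4d_1-i)}\lambda^i$, $G_1=g(\lambda^4w,\lambda^3x,\lambda y,z)=\sum_j g^{(j,4d_2-j)}\lambda^j$, and $\tilde F_1=F_1/\lambda^{i_{\min}}$, $\tilde G_1=G_1/\lambda^{j_{\min}}$. Then $$\sqrt{(\tilde F_1,\tilde G_1)T}=\sqrt{(\lambda,f_{\min},g_{\min})T}\cap\mathfrak pT.$$
   Context: Let $k$ be an algebraically closed field of characteristic zero, $R=k[w,x,y,z]$, and let $\mathfrak p\subseteq R$ be the homogeneous prime ideal of Macaulay's curve $C_4\subseteq\mathbb P^3_k$, the curve with parametrization $[s^4:s^3t:st^3:t^4]$. Endow $R$ with the bigrading $\deg w=(4,0)$, $\deg x=(3,1)$, $\deg y=(1,3)$, $\deg z=(0,4)$; $\mathfrak p$ is bihomogeneous. Standing hypothesis: $f,g\in\mathfrak p$ are homogeneous (in the usual grading) of degrees $d_1,d_2$ with $\sqrt{(f,g)R}=\mathfrak p$. Write $f=\sum_{i=i_{\min}}^{i_{\max}} f^{(i,4d_1-i)}$ and $g=\sum_{j=j_{\min}}^{j_{\max}} g^{(j,4d_2-j)}$ as sums of bihomogeneous components, where $f^{(i,4d_1-i)}$ is the component of bidegree $(i,4d_1-i)$ and $i_{\min},i_{\max},j_{\min},j_{\max}$ are chosen so that $f_{\min}:=f^{(i_{\min},4d_1-i_{\min})}$, $f_{\max}:=f^{(i_{\max},4d_1-i_{\max})}$,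 $g_{\min}:=g^{(j_{\min},4d_2-j_{\min})}$, $g_{\max}:=g^{(j_{\max},4d_2-j_{\max})}$ are all nonzero. *)

(* Defs.v *)
From HB Require Import structures.
From mathcomp Require Import all_boot all_order all_algebra.
Set Implicit Arguments. Unset Strict Implicit. Unset Printing Implicit Defensive.
Import Order.TTheory GRing.Theory.
Local Open Scope ring_scope.

(* R = k[w,x,y,z] as nested univariate polynomials: z is the outermost
   variable, then y, then x, and w is the innermost. *)
Definition R4 (k : fieldType) := {poly {poly {poly {poly k}}}}.

Definition varW {k : fieldType} : R4 k := ('X%:P%:P%:P).
Definition varX {k : fieldType} : R4 k := ('X%:P%:P).
Definition varY {k : fieldType} : R4 k := ('X%:P).
Definition varZ {k : fieldType} : R4 k := 'X.

Definition cst4 {k : fieldType} (c : k) : R4 k := c%:P%:P%:P%:P.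

Definition coef4 {k : fieldType} (f : R4 k) (a b c e : nat) : k :=
  (((f`_e)`_c)`_b)`_a.

Definition mono4 {k : fieldType} (a b c e : nat) : R4 k :=
  varW ^+ a * varX ^+ b * varY ^+ c * varZ ^+ e.

Definition sum_terms {k : fieldType} {A : nmodType} (f : R4 k)
  (F : nat -> nat -> nat -> nat -> k -> A) : A :=
  \sum_(e < size f) \sum_(c < size f`_e) \sum_(b < size (f`_e)`_c)
    \sum_(a < size ((f`_e)`_c)`_b) F a b c e (coef4 f a b c e).

Definition eval4 {k : fieldType} (f : R4 k) (pw px py pz : k) : k :=
  f.[pz%:P%:P%:P].[py%:P%:P].[px%:P].[pw].

Definition homog {k : fieldType} (d : nat) (f : R4 k) : Prop :=
  forall a b c e, coef4 f a b c e != 0 -> (a + b + c + e)%N = d.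

Definition pC4 {k : fieldType} (f : R4 k) : Prop :=
  forall s t : k, eval4 f (s ^+ 4) (s ^+ 3 * t) (s * t ^+ 3) (t ^+ 4) = 0.

(* bihomogeneous component of f of first bidegree i, where
   deg w = (4,0), deg x = (3,1), deg y = (1,3), deg z = (0,4).  For f
   homogeneous of degree d this is the component f^{(i,4d-i)}. *)
Definition bicomp {k : fieldType} (f : R4 k) (i : nat) : R4 k :=
  sum_terms f (fun a b c e co =>
    if (4 * a + 3 * b + c == i)%N then cst4 co * mono4 a b c e else 0).

Definition lamsub {k : fieldType} (f : R4 k) : {poly R4 k} :=
  sum_terms f (fun a b c e co =>
    (cst4 co * mono4 a b c e)%:P * 'X ^+ (4 * a + 3 * b + c)).

Definition ideal_span {A : comNzRingType} (P : A -> Prop) (h : A) : Prop :=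
  exists n (cf g : 'I_n -> A), (forall i, P (g i)) /\ h = \sum_(i < n) cf i * g i.

Definition ideal_gen {A : comNzRingType} (s : seq A) : A -> Prop :=
  ideal_span (fun q => q \in s).

Definition radical {A : comNzRingType} (I : A -> Prop) (h : A) : Prop :=
  exists n : nat, I (h ^+ n).

Definition ext_poly {A : comNzRingType} (I : A -> Prop) : {poly A} -> Prop :=
  ideal_span (fun q => exists r, I r /\ q = r%:P).

(* Main.v *)
Require Import Defs.
From HB Require Import structures.
From mathcomp Require Import all_boot all_order all_algebra.
From mathcomp Require Import ring zify.
Import GRing.Theory.
Local Open Scope ring_scope.
Set Implicit Arguments. Unset Strict Implicit.

Section Ideals.
Variable A : comNzRingType.

Definition isId (I : A -> Prop) :=
  [/\ I 0, (forall x y, I x -> I y -> I (x + y)) & (forall c x, I x -> I (c * x))].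

Lemma span_ideal P : isId (ideal_span P).
Proof.
split.
- exists 0%N, (fun _ => 0), (fun _ => 0); split; first by case.
  by rewrite big_ord0.
- move=> x y [n [cf [g [Pg ->]]]] [m [cf' [g' [Pg' ->]]]].
  exists (n + m)%N, (fun i => match split i with inl j => cf j | inr j => cf' j end),
    (fun i => match split i with inl j => g j | inr j => g' j end); split.
    by move=> i; case: (split i).
  rewrite big_split_ord /=; congr (_ + _); apply: eq_bigr => i _.
    by rewrite (unsplitK (inl i)).
  by rewrite (unsplitK (inr i)).
- move=> c x [n [cf [g [Pg ->]]]].
  exists n, (fun i => c * cf i), g; split => //.
  by rewrite mulr_sumr; apply: eq_bigr => i _; rewrite mulrA.
Qed.

Lemma span_base (P : A -> Prop) x : P x -> ideal_span P x.
Proof.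
move=> Px; exists 1%N, (fun _ => 1), (fun _ => x); split => //.
by rewrite big_ord1 mul1r.
Qed.

Lemma ideal_sum I n (F : 'I_n -> A) : isId I -> (forall i, I (F i)) -> I (\sum_(i < n) F i).
Proof.
case=> I0 ID IM FI; apply: (big_ind I) => //.
Qed.

Lemma span_min (P I : A -> Prop) : isId I -> (forall x, P x -> I x) ->
  forall x, ideal_span P x -> I x.
Proof.
move=> Iid PI x [n [cf [g [Pg ->]]]]; apply: ideal_sum => // i.
case: Iid => _ _ IM; apply: IM; exact: PI.
Qed.

Lemma ideal_mulr I c x : isId I -> I x -> I (x * c).
Proof. by case=> _ _ IM Ix; rewrite mulrC; apply: IM. Qed.

Lemma radical_mul I c x : isId I -> radical I x -> radical I (c * x).
Proof.
move=> Iid [n Hn]; exists n; rewrite exprMn; case: Iid => _ _ IM; exact: IM.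
Qed.

Lemma radical_add I x y : isId I -> radical I x -> radical I y -> radical I (x + y).
Proof.
move=> Iid [m Hm] [n Hn]; exists (m + n)%N; rewrite exprDn.
apply: ideal_sum => // i; rewrite -mulr_natl.
have [IC ID IM] := Iid.
case: (leqP n i) => hi.
  have -> : y ^+ i = y ^+ (i - n) * y ^+ n by rewrite -exprD subnK.
  rewrite mulrA mulrA; exact: IM.
have -> : x ^+ (m + n - i) = x ^+ (n - i) * x ^+ m.
  by rewrite -exprD; congr (_ ^+ _); lia.
rewrite [X in I X](_ : _ = ('C(m + n, i)%:R * x ^+ (n - i) * y ^+ i) * x ^+ m).
  exact: IM.
ring.
Qed.

Lemma radical_sum I n (F : 'I_n -> A) : isId I -> (forall i, radical I (F i)) ->
  radical I (\sum_(i < n) F i).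
Proof.
move=> Iid FI; apply: (big_ind (radical I)) => //.
- by exists 1%N; rewrite expr1; case: Iid.
- by move=> x y; apply: radical_add.
Qed.

End Ideals.

Lemma pexp (B : nzRingType) (p : {poly B}) : p = \sum_(i < size p) (p`_i)%:P * 'X^i.
Proof.
transitivity (\poly_(i < size p) p`_i); first by rewrite coefK.
by rewrite poly_def; apply: eq_bigr => i _; rewrite mul_polyC.
Qed.

Lemma exp_split (B : comNzRingType) (x y : B) K : exists z, (x + y) ^+ K = x ^+ K + y * z.
Proof.
elim: K => [|K [z IH]]; first by exists 0; rewrite !expr0 mulr0 addr0.
exists (x ^+ K + (x + y) * z); rewrite exprS IH exprS; ring.
Qed.

Section Main.
Variable A : idomainType.
Local Notation T := {poly A}.
Variables (P : A -> Prop) (phi : A -> T) (comp : A -> nat -> A).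
Hypotheses (PI : isId P)
 (Pprime : forall (h : T) n, (forall i, P (h ^+ n)`_i) -> forall i, P h`_i)
 (phiD : forall x y, phi (x + y) = phi x + phi y)
 (phiM : forall x y, phi (x * y) = phi x * phi y)
 (phi1 : phi 1 = 1)
 (phi_coef : forall u i, (phi u)`_i = comp u i)
 (comp_phi : forall u i, phi (comp u i) = (comp u i)%:P * 'X^i)
 (comp_sum : forall u, u = \sum_(i < size (phi u)) comp u i)
 (comp_P : forall u i, P u -> P (comp u i)).

Lemma phi0g : phi 0 = 0.
Proof. by apply: (addrI (phi 0)); rewrite -phiD !addr0. Qed.

Lemma phiXn x m : phi (x ^+ m) = phi x ^+ m.
Proof. by elim: m => [|m IH]; rewrite ?expr0 ?phi1 // !exprS phiM IH. Qed.

Definition coefP (q : T) := forall i, P q`_i.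

Lemma coefP_ideal : isId coefP.
Proof.
have [P0 PD PM] := PI.
split.
- by move=> i; rewrite coef0.
- by move=> x y Hx Hy i; rewrite coefD; apply: PD.
- move=> c x Hx i; rewrite coefM; apply: ideal_sum => // j; exact: PM.
Qed.

Lemma ext_char (q : T) : ext_poly P q <-> coefP q.
Proof.
split.
- apply: span_min; first exact: coefP_ideal.
  move=> x [r [Pr ->]] i; rewrite coefC; case: eqP => _ //; by case: PI.
- move=> Hq; exists (size q), (fun i => 'X^i), (fun i => (q`_i)%:P); split.
    by move=> i; exists q`_i.
  by rewrite {1}(pexp q); apply: eq_bigr => i _; rewrite mulrC.
Qed.

Lemma take1 (q : T) : take_poly 1 q = (q`_0)%:P.
Proof. by apply/polyP => i; rewrite coef_take_poly coefC; case: i. Qed.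

Variables (f g : A) (fp : P f) (gp : P g)
  (hrad : forall h, P h -> radical (ideal_gen [:: f; g]) h)
  (imin jmin : nat)
  (himin_le : forall i, comp f i != 0 -> (imin <= i)%N)
  (hjmin_le : forall j, comp g j != 0 -> (jmin <= j)%N).

Lemma decomp (u : A) m : (forall i, comp u i != 0 -> (m <= i)%N) ->
  [/\ phi u = (phi u %/ 'X^m) * 'X^m,
      forall i, (phi u %/ 'X^m)`_i = comp u (i + m) &
      phi u %/ 'X^m = (comp u m)%:P + 'X * drop_poly 1 (phi u %/ 'X^m)].
Proof.
move=> hm.
have tk : take_poly m (phi u) = 0.
  apply/polyP => i; rewrite coef_take_poly coef0; case: ifP => // hi.
  rewrite phi_coef; apply/eqP; apply: contraLR hi => /hm; rewrite -leqNgt //.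
have e1 : phi u = drop_poly m (phi u) * 'X^m.
  by rewrite -{1}(poly_take_drop m (phi u)) tk add0r.
have e2 : phi u %/ 'X^m = drop_poly m (phi u).
  by rewrite {1}e1 Pdiv.IdomainMonic.mulpK // monicXn.
split.
- by rewrite e2.
- by move=> i; rewrite e2 coef_drop_poly phi_coef.
- rewrite -{1}(poly_take_drop 1 (phi u %/ 'X^m)) take1 e2 coef_drop_poly phi_coef.
  by rewrite add0n expr1 mulrC.
Qed.

Theorem gen_main :
  let F1t := phi f %/ 'X ^+ imin in
  let G1t := phi g %/ 'X ^+ jmin in
  forall h : T,
    radical (ideal_gen [:: F1t; G1t]) h <->
    (radical (ideal_gen [:: 'X; (comp f imin)%:P; (comp g jmin)%:P]) h
     /\ ext_poly P h).
Proof.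
move=> F1t G1t h.
have [fe1 fe2 fe3] := decomp himin_le.
have [ge1 ge2 ge3] := decomp hjmin_le.
rewrite -/F1t in fe1 fe2 fe3; rewrite -/G1t in ge1 ge2 ge3.
set J := ideal_gen [:: F1t; G1t].
set K := ideal_gen [:: 'X; (comp f imin)%:P; (comp g jmin)%:P].
have Jid : isId J by apply: span_ideal.
have Kid : isId K by apply: span_ideal.
have [J0 JD JM] := Jid.
have [K0 KD KM] := Kid.
have JF : J F1t by apply: span_base; rewrite !inE ?eqxx ?orbT.
have JG : J G1t by apply: span_base; rewrite !inE ?eqxx ?orbT.
split.
- move=> [n Hn]; split.
  + exists n; move: Hn; apply: span_min => // x; rewrite !inE => /orP[] /eqP ->.
    * rewrite fe3; apply: KD; first by apply: span_base; rewrite !inE ?eqxx ?orbT.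
      by rewrite mulrC; apply: KM; apply: span_base; rewrite !inE ?eqxx ?orbT.
    * rewrite ge3; apply: KD; first by apply: span_base; rewrite !inE ?eqxx ?orbT.
      by rewrite mulrC; apply: KM; apply: span_base; rewrite !inE ?eqxx ?orbT.
  + apply/ext_char => i0; apply: (@Pprime h n); change (coefP (h ^+ n)).
    move: Hn; apply: span_min.
      exact: coefP_ideal.
    move=> x; rewrite !inE => /orP[] /eqP -> i.
    * by rewrite fe2; apply: comp_P.
    * by rewrite ge2; apply: comp_P.
- case=> [[N HN] /ext_char hP].
  pose J' := fun w : T => exists K, J ('X^K * w).
  have J'id : isId J'.
    split.
    + by exists 0%N; rewrite mulr0.
    + move=> x y [K1 H1] [K2 H2]; exists (K1 + K2)%N.
      rewrite mulrDr; apply: JD.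
        by rewrite exprD (mulrC ('X^K1)) -mulrA; apply: JM.
      by rewrite exprD -mulrA; apply: JM.
    + move=> c x [K1 H1]; exists K1; rewrite mulrCA; exact: JM.
  have phiJ : forall x, ideal_gen [:: f; g] x -> J (phi x).
    apply: span_min.
      split; first by rewrite phi0g.
        by move=> x y Hx Hy; rewrite phiD; apply: JD.
      by move=> c x Hx; rewrite phiM; apply: JM.
    move=> x; rewrite !inE => /orP[] /eqP ->.
      by rewrite fe1 mulrC; apply: JM.
    by rewrite ge1 mulrC; apply: JM.
  have C1 : forall u, P u -> radical J' (u%:P).
    move=> u Pu; rewrite (comp_sum u) rmorph_sum; apply: radical_sum => // i.
    have [m Hm] := hrad (comp_P i Pu).
    have := phiJ _ Hm; rewrite phiXn comp_phi exprMn -exprM => Hj.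
    by exists m; exists (i * m)%N; rewrite mulrC.
  have C2 : radical J' h.
    rewrite (pexp h); apply: radical_sum => // i.
    rewrite mulrC; apply: radical_mul => //; exact: C1.
  have [m [K1 HK]] := C2.
  have I2 : forall v, K v -> exists a j, J j /\ v = 'X * a + j.
    apply: span_min.
      split.
      + by exists 0, 0; rewrite mulr0 addr0.
      + move=> x y [a1 [j1 [Hj1 ->]]] [a2 [j2 [Hj2 ->]]].
        exists (a1 + a2), (j1 + j2); split; first exact: JD.
        by rewrite mulrDr addrACA.
      + move=> c x [a1 [j1 [Hj1 ->]]]; exists (c * a1), (c * j1); split; first exact: JM.
        by rewrite mulrDr mulrCA.
    move=> x; rewrite !inE => /orP[/eqP ->|/orP[] /eqP ->].
    + by exists 1, 0; rewrite mulr1 addr0.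
    + exists (- drop_poly 1 F1t), F1t; split => //.
      by rewrite {2}fe3 mulrN addrC addrK.
    + exists (- drop_poly 1 G1t), G1t; split => //.
      by rewrite {2}ge3 mulrN addrC addrK.
  have [a [j [Jj Ej]]] := I2 _ HN.
  have [z Ez] := exp_split ('X * a) j K1.
  exists (N * K1 + m)%N; rewrite exprD exprM Ej Ez mulrDl.
  apply: JD.
    by rewrite exprMn -mulrA mulrCA; apply: JM.
  by rewrite -mulrA mulrC; apply: JM.
Qed.

End Main.


Section Shuf.
Variable B : nzSemiRingType.
Hypothesis Hc : forall x y : B, x * y = y * x.
Lemma mulCA_ (x y z : B) : x * (y * z) = y * (x * z).
Proof. by rewrite (@mulrA B) (Hc x y) -(@mulrA B). Qed.
Lemma swap4 (a b c d : B) : (a * b) * (c * d) = (a * c) * (b * d).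
Proof. by rewrite -(@mulrA B) (mulCA_ b) (@mulrA B). Qed.
Lemma shuffleS (co p q r w x y z : B) :
  co * ((p * w) * (q * x) * (r * y) * z) = co * (w * x * y * z) * (p * q * r).
Proof.
have e1 : (p * w) * (q * x) = (p * q) * (w * x) by apply: swap4.
have e2 : (p * q) * (w * x) * (r * y) = (p * q * r) * (w * x * y) by apply: swap4.
rewrite e1 e2 -(@mulrA B (p * q * r)) (Hc (p * q * r)).
by rewrite !(@mulrA B).
Qed.
End Shuf.

Section Conc.
Variable k : fieldType.
Local Notation R := (R4 k).
Local Notation T := {poly R}.

Lemma st_ext (A : nmodType) (f : R) (F G : nat -> nat -> nat -> nat -> k -> A) :
  (forall a b c e co, F a b c e co = G a b c e co) -> sum_terms f F = sum_terms f G.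
Proof.
move=> FG; rewrite /sum_terms; apply: eq_bigr => e _; apply: eq_bigr => c _.
apply: eq_bigr => b _; apply: eq_bigr => a _; exact: FG.
Qed.

Lemma st_morph (A B : nmodType) (g : A -> B) (f : R) F :
  g 0 = 0 -> (forall x y, g (x + y) = g x + g y) ->
  g (sum_terms f F) = sum_terms f (fun a b c e co => g (F a b c e co)).
Proof.
move=> g0 gD; rewrite /sum_terms (big_morph g gD g0); apply: eq_bigr => e _.
rewrite (big_morph g gD g0); apply: eq_bigr => c _.
rewrite (big_morph g gD g0); apply: eq_bigr => b _.
by rewrite (big_morph g gD g0).
Qed.

Lemma expand (f : R) : f = sum_terms f (fun a b c e co => cst4 co * mono4 a b c e).
Proof.
rewrite /sum_terms.
transitivity (\sum_(e < size f) (f`_e)%:P * 'X^e); first exact: pexp.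
apply: eq_bigr => e _.
transitivity ((\sum_(c < size f`_e) ((f`_e)`_c)%:P * 'X^c)%:P * 'X^e); first by rewrite -pexp.
rewrite rmorph_sum mulr_suml; apply: eq_bigr => c _.
transitivity (((\sum_(b < size (f`_e)`_c) (((f`_e)`_c)`_b)%:P * 'X^b)%:P * 'X^c)%:P * 'X^e);
  first by rewrite -pexp.
rewrite rmorph_sum mulr_suml rmorph_sum mulr_suml; apply: eq_bigr => b _.
transitivity ((((\sum_(a < size ((f`_e)`_c)`_b) ((((f`_e)`_c)`_b)`_a)%:P * 'X^a)%:P * 'X^b)%:P * 'X^c)%:P * 'X^e);
  first by rewrite -pexp.
rewrite rmorph_sum mulr_suml rmorph_sum mulr_suml rmorph_sum mulr_suml; apply: eq_bigr => a _.
rewrite /cst4 /mono4 /coef4 /varW /varX /varY /varZ !rmorphM !rmorphXn.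
by rewrite [in RHS]mulrA [in RHS]mulrA [in RHS]mulrA.
Qed.

Lemma mulTC (x y : T) : x * y = y * x.
Proof. exact: mulrC. Qed.

Definition c5 : {rmorphism k -> T} := (@polyC R \o @polyC {poly {poly {poly k}}} \o @polyC {poly {poly k}} \o @polyC {poly k} \o @polyC k)%FUN.
Definition phi1 : {rmorphism {poly k} -> T} := horner_morph (fun x => mulTC ('X^4 * varW%:P) (c5 x)).
Definition phi2 : {rmorphism {poly {poly k}} -> T} := horner_morph (fun x => mulTC ('X^3 * varX%:P) (phi1 x)).
Definition phi3 : {rmorphism {poly {poly {poly k}}} -> T} := horner_morph (fun x => mulTC ('X * varY%:P) (phi2 x)).
Definition phi : {rmorphism R -> T} := horner_morph (fun x => mulTC (varZ%:P) (phi3 x)).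

Lemma phiE u : phi u = horner_morph (fun x => mulTC (varZ%:P) (phi3 x)) u. Proof. by []. Qed.
Lemma phi3E u : phi3 u = horner_morph (fun x => mulTC ('X * varY%:P) (phi2 x)) u. Proof. by []. Qed.
Lemma phi2E u : phi2 u = horner_morph (fun x => mulTC ('X^3 * varX%:P) (phi1 x)) u. Proof. by []. Qed.
Lemma phi1E u : phi1 u = horner_morph (fun x => mulTC ('X^4 * varW%:P) (c5 x)) u. Proof. by []. Qed.

Lemma phiC c : phi (cst4 c) = (cst4 c)%:P.
Proof. by rewrite /cst4 phiE horner_morphC phi3E horner_morphC phi2E horner_morphC phi1E horner_morphC. Qed.
Lemma phiW : phi varW = 'X^4 * varW%:P.
Proof. by rewrite /varW phiE horner_morphC phi3E horner_morphC phi2E horner_morphC phi1E horner_morphX. Qed.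
Lemma phiX : phi varX = 'X^3 * varX%:P.
Proof. by rewrite /varX phiE horner_morphC phi3E horner_morphC phi2E horner_morphX. Qed.
Lemma phiY : phi varY = 'X * varY%:P.
Proof. by rewrite /varY phiE horner_morphC phi3E horner_morphX. Qed.
Lemma phiZ : phi varZ = varZ%:P.
Proof. by rewrite /varZ phiE horner_morphX. Qed.

Lemma phi_term co a b c e :
  phi (cst4 co * mono4 a b c e) = (cst4 co * mono4 a b c e)%:P * 'X^(4 * a + 3 * b + c).
Proof.
rewrite /mono4 !rmorphM !rmorphXn phiC phiW phiX phiY phiZ.
rewrite (exprMn_comm a (mulTC ('X^4) (varW%:P))) (exprMn_comm b (mulTC ('X^3) (varX%:P))) (exprMn_comm c (mulTC 'X (varY%:P))).
rewrite (exprD _ (4 * a + 3 * b)) (exprD _ (4 * a)) !exprM.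
exact: shuffleS mulTC _ _ _ _ _ _ _ _.
Qed.

Lemma phi0 : phi 0 = 0. Proof. exact: rmorph0. Qed.

Lemma lamsubE u : lamsub u = sum_terms u (fun a b c e (co : k) => (cst4 co * mono4 a b c e)%:P * 'X^(4*a+3*b+c)).
Proof. by []. Qed.
Lemma lamsub_phi u : lamsub u = phi u.
Proof.
rewrite lamsubE {2}(expand u) (st_morph (g := phi)) ?rmorph0 //; last by move=> x y; rewrite rmorphD.
by apply: st_ext => a b c e co; rewrite phi_term.
Qed.

Lemma coefCXn (B : nzSemiRingType) (c : B) n i : (c%:P * 'X^n)`_i = if (n == i)%N then c else 0.
Proof. rewrite coefCM coefXn mulr_natr mulrb eq_sym. done. Qed.

Lemma lamsub_coef (u : R) i : (lamsub u)`_i = bicomp u i.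
Proof.
rewrite lamsubE (st_morph (g := fun p : T => p`_i)) ?coef0 //; last by move=> x y; rewrite coefD.
by apply: st_ext => a b c e co; rewrite coefCXn.
Qed.
Lemma comp_phi (u : R) i : lamsub (bicomp u i) = (bicomp u i)%:P * 'X^i.
Proof.
rewrite lamsub_phi /bicomp (st_morph (g := phi)) ?rmorph0 //; last by move=> x y; rewrite rmorphD.
have g0 : (0 : R)%:P * 'X^i = 0 by rewrite polyC0 mul0r.
have gD : forall x y : R, (x + y)%:P * 'X^i = x%:P * 'X^i + y%:P * 'X^i.
  by move=> x y; rewrite polyCD mulrDl.
rewrite (@st_morph _ _ (fun r : R => r%:P * 'X^i) u _ g0 gD).
apply: st_ext => a b c e co. case: eqP => [<-|_]. exact: phi_term. by rewrite rmorph0 polyC0 mul0r.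
Qed.
Lemma lamsub1 (u : R) : (lamsub u).[1] = u.
Proof.
have g0 : (0 : T).[1] = 0 by rewrite horner0.
have gD : forall x y : T, (x + y).[1] = x.[1] + y.[1] by move=> x y; rewrite hornerD.
rewrite lamsubE (@st_morph _ _ (fun p : T => p.[1]) u _ g0 gD).
rewrite [RHS](expand u); apply: st_ext => a b c e co.
by rewrite hornerCM hornerXn expr1n mulr1.
Qed.

Lemma comp_sum (u : R) : u = \sum_(i < size (lamsub u)) bicomp u i.
Proof.
rewrite -[LHS](lamsub1 u) horner_coef; apply: eq_bigr => i _.
by rewrite expr1n mulr1 lamsub_coef.
Qed.
Definition ev (s t : k) : {rmorphism R -> k} :=
  (horner_eval (s ^+ 4) \o horner_eval ((s ^+ 3 * t)%:P) \o
   horner_eval ((s * t ^+ 3)%:P%:P) \o horner_eval ((t ^+ 4)%:P%:P%:P))%FUN.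

Lemma evE (f : R) s t : eval4 f (s ^+ 4) (s ^+ 3 * t) (s * t ^+ 3) (t ^+ 4) = ev s t f.
Proof. by []. Qed.

Lemma ev_term s t co a b c e :
  ev s t (cst4 co * mono4 a b c e) = co * (s ^+ (4 * a + 3 * b + c) * t ^+ (b + 3 * c + 4 * e)).
Proof.
rewrite /mono4 !rmorphM !rmorphXn /= /cst4 /varW /varX /varY /varZ /horner_eval.
do 4 rewrite ?hornerC ?hornerX.
rewrite (exprD _ (4 * a + 3 * b)) (exprD _ (4 * a)) (exprD _ (b + 3 * c)) (exprD _ b) !exprM.
rewrite !exprMn; ring.
Qed.
Lemma pC4_ideal : isId (@pC4 k).
Proof.
split.
- by move=> s t; rewrite evE rmorph0.
- move=> x y Hx Hy s t; rewrite evE rmorphD -!evE.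
  by rewrite (Hx s t) (Hy s t) addr0.
- move=> c x Hx s t; rewrite evE rmorphM -!evE.
  by rewrite (Hx s t) mulr0.
Qed.

Lemma pC4_prime (h : T) n : (forall i, pC4 (h ^+ n)`_i) -> forall i, pC4 h`_i.
Proof.
move=> H i s t; rewrite evE.
have H0 : map_poly (ev s t) (h ^+ n) = 0.
  by apply/polyP => j; rewrite coef_map coef0; exact: (H j s t).
move: H0; rewrite rmorphXn => /eqP; rewrite expf_eq0 => /andP[_ /eqP h0].
by have := congr1 (fun p : {poly k} => p`_i) h0; rewrite coef_map coef0.
Qed.
Variable char0 : [pchar k] =i pred0.

Lemma natr_lt_neq m n : (m < n)%N -> m%:R <> n%:R :> k.
Proof.
move=> lt E.
have H : (n - m)%:R == 0 :> k by rewrite (natrB k (ltnW lt)) -E subrr.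
have gt : (0 < n - m)%N by rewrite subn_gt0.
have [p Hp] := natf0_pchar gt H.
by move: Hp; rewrite char0.
Qed.

Lemma natr_inj_k : injective (fun n : nat => n%:R : k).
Proof.
move=> m n /= E; case: (ltngtP m n) => // lt.
  by case: (natr_lt_neq lt E).
by case: (natr_lt_neq lt (esym E)).
Qed.

Lemma poly_eq0_all (Q : {poly k}) : (forall x, Q.[x] = 0) -> Q = 0.
Proof.
move=> HQ; apply/eqP; apply/negPn/negP => nz.
have H1 : all (root Q) [seq (i%:R : k) | i <- iota 0 (size Q)].
  by apply/allP => x /mapP[i _ ->]; rewrite /root HQ.
have H2 : uniq [seq (i%:R : k) | i <- iota 0 (size Q)].
  by rewrite (map_inj_uniq natr_inj_k) iota_uniq.
by have := max_poly_roots nz H1 H2; rewrite size_map size_iota ltnn.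
Qed.

Lemma comp_P (u : R) i : pC4 u -> pC4 (bicomp u i).
Proof.
move=> Pu s t.
pose Q : {poly k} := sum_terms u (fun a b c e co =>
  (co * t ^+ (b + 3 * c + 4 * e))%:P * 'X^(4 * a + 3 * b + c)).
have HQ : forall x, Q.[x] = ev x t u.
  move=> x; rewrite [in RHS](expand u) /Q.
  rewrite (@st_morph _ _ (fun p : {poly k} => p.[x]) u _ (horner0 x) (fun p q => hornerD p q x)).
  rewrite (@st_morph _ _ (ev x t) u _ (rmorph0 _) (rmorphD _)).
  apply: st_ext => a b c e co.
  by rewrite hornerCM hornerXn ev_term -mulrA (mulrC (t ^+ _)).
have Q0 : Q = 0 by apply: poly_eq0_all => x; rewrite HQ -evE; exact: Pu.
rewrite evE /bicomp (@st_morph _ _ (ev s t) u _ (rmorph0 _) (rmorphD _)).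
transitivity (s ^+ i * Q`_i); last by rewrite Q0 coef0 mulr0.
rewrite /Q (@st_morph _ _ (fun p : {poly k} => p`_i) u _ (coef0 _ i) (fun p q => coefD p q i)).
rewrite (@st_morph _ _ (fun y : k => s ^+ i * y) u _ (mulr0 _) (fun x y => mulrDr _ x y)).
apply: st_ext => a b c e co; rewrite coefCXn.
case: eqP => [<-|_]; last by rewrite rmorph0 mulr0.
by rewrite ev_term mulrCA.
Qed.

End Conc.


Section Fin.
Variable k : fieldType.
Lemma lsD (x y : R4 k) : lamsub (x + y) = lamsub x + lamsub y.
Proof. by rewrite !lamsub_phi rmorphD. Qed.
Lemma lsM (x y : R4 k) : lamsub (x * y) = lamsub x * lamsub y.
Proof. by rewrite !lamsub_phi rmorphM. Qed.
Lemma ls1 : lamsub (1 : R4 k) = 1.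
Proof. by rewrite !lamsub_phi rmorph1. Qed.
End Fin.


Unset Implicit Arguments.
Theorem mainTheorem4 (k : closedFieldType) (char0 : [pchar k] =i pred0)
  (f g : R4 k) (d1 d2 : nat)
  (hf : homog d1 f) (hg : homog d2 g)
  (fp : pC4 f) (gp : pC4 g)
  (hrad : forall h : R4 k, radical (ideal_gen [:: f; g]) h <-> pC4 h)
  (imin jmin : nat)
  (himin : bicomp f imin != 0)
  (himin_le : forall i, bicomp f i != 0 -> (imin <= i)%N)
  (hjmin : bicomp g jmin != 0)
  (hjmin_le : forall j, bicomp g j != 0 -> (jmin <= j)%N) :
  let F1t := lamsub f %/ 'X ^+ imin in
  let G1t := lamsub g %/ 'X ^+ jmin in
  forall h : {poly R4 k},
    radical (ideal_gen [:: F1t; G1t]) h <->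
    (radical (ideal_gen [:: 'X; (bicomp f imin)%:P; (bicomp g jmin)%:P]) h
     /\ ext_poly pC4 h).
Proof.
exact: (@gen_main (R4 k) (@pC4 k) (@lamsub k) (@bicomp k) (@pC4_ideal k) (@pC4_prime k)
  (@lsD k) (@lsM k) (@ls1 k) (@lamsub_coef k) (@comp_phi k) (@comp_sum k) (@comp_P k char0)
  f g fp gp (fun h ph => (hrad h).2 ph) imin jmin himin_le hjmin_le).
Qed.
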